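(* Let $\mathscr{H}$ be a complex Hilbert space, $N(\cdot)$ a norm on $\mathbb{B}(\mathscr{H})$, and $T\in\mathbb{B}(\mathscr{H})$. Then $$\frac12\max\{w_N(T+T^* ),w_N(T-T^* )\}\leq w_N(T)\leq\frac12\sqrt{w_N^2(T+T^* )+w_N^2(T-T^* )}.$$
   Context: For $T\in\mathbb{B}(\mathscr{H})$: $\Re(T)=\frac12(T+T^* )$ and $w_N(T)=\sup_{\theta\in\mathbb{R}}N(\Re(e^{i\theta}T))$. *)

(* Defs.v *)
From HB Require Import structures.
From mathcomp Require Import all_boot all_order all_algebra.
From mathcomp Require Import all_classical all_reals all_analysis.
From mathcomp Require Import complex.
Set Implicit Arguments. Unset Strict Implicit. Unset Printing Implicit Defensive.
Import Order.TTheory GRing.Theory Num.Theory.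
Local Open Scope ring_scope.
Local Open Scope classical_set_scope.

Definition inner_product (R : realType) (V : lmodType R[i]) (ip : V -> V -> R[i]) : Prop :=
  [/\ forall (a : R[i]) (x y z : V), ip (a *: x + y) z = a * ip x z + ip y z,
      forall x y : V, ip y x = conjc (ip x y),
      forall x : V, 0 <= complex.Re (ip x x) /\ complex.Im (ip x x) = 0
    & forall x : V, ip x x = 0 -> x = 0].

Definition ipnorm (R : realType) (V : lmodType R[i]) (ip : V -> V -> R[i]) (x : V) : R :=
  Num.sqrt (complex.Re (ip x x)).

Definition ip_complete (R : realType) (V : lmodType R[i]) (ip : V -> V -> R[i]) : Prop :=
  forall u : nat -> V,
    (forall e : R, 0 < e -> exists M : nat, forall m n : nat, (M <= m)%N -> (M <= n)%N ->
        ipnorm ip (u m - u n) < e) ->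
    exists l : V, forall e : R, 0 < e -> exists M : nat, forall n : nat, (M <= n)%N ->
        ipnorm ip (u n - l) < e.

Definition hilbert_space (R : realType) (V : lmodType R[i]) (ip : V -> V -> R[i]) : Prop :=
  inner_product ip /\ ip_complete ip.

Definition bounded_op (R : realType) (V : lmodType R[i]) (ip : V -> V -> R[i])
  (T : V -> V) : Prop :=
  (forall (a : R[i]) (x y : V), T (a *: x + y) = a *: T x + T y) /\
  exists M : R, forall x : V, ipnorm ip (T x) <= M * ipnorm ip x.

Definition op_add (R : realType) (V : lmodType R[i]) (S T : V -> V) : V -> V :=
  fun x => S x + T x.
Definition op_opp (R : realType) (V : lmodType R[i]) (S : V -> V) : V -> V :=
  fun x => - S x.
Definition op_scale (R : realType) (V : lmodType R[i]) (a : R[i]) (S : V -> V) : V -> V :=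
  fun x => a *: S x.

Definition is_adjoint (R : realType) (V : lmodType R[i]) (ip : V -> V -> R[i])
  (T S : V -> V) : Prop := forall x y : V, ip (T x) y = ip x (S y).

(* the adjoint T^* (chosen; unique when it exists, and it always exists for
   bounded T in a Hilbert space) *)
Definition adjoint (R : realType) (V : lmodType R[i]) (ip : V -> V -> R[i])
  (T : V -> V) : V -> V :=
  match pselect (exists S, is_adjoint ip T S) with
  | left h => projT1 (cid h)
  | right _ => fun _ => 0
  end.

Definition op_Re (R : realType) (V : lmodType R[i]) (ip : V -> V -> R[i])
  (T : V -> V) : V -> V :=
  op_scale (2^-1) (op_add T (adjoint ip T)).

Definition op_norm_on (R : realType) (V : lmodType R[i]) (ip : V -> V -> R[i])
  (N : (V -> V) -> R) : Prop :=
  [/\ forall S, bounded_op ip S -> 0 <= N S,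
      forall S, bounded_op ip S -> N S = 0 -> S = (fun _ => 0),
      forall (a : R[i]) S, bounded_op ip S -> (N (op_scale a S))%:C%C = `|a| * (N S)%:C%C
    & forall S U, bounded_op ip S -> bounded_op ip U -> N (op_add S U) <= N S + N U].

Definition expi (R : realType) (t : R) : R[i] := Complex (cos t) (sin t).

Definition wN (R : realType) (V : lmodType R[i]) (ip : V -> V -> R[i])
  (N : (V -> V) -> R) (T : V -> V) : R :=
  sup [set N (op_Re ip (op_scale (expi t) T)) | t in [set: R]].

(* Main.v *)
Require Import Defs.
From HB Require Import structures.
From mathcomp Require Import all_boot all_order all_algebra.
From mathcomp Require Import all_classical all_reals all_analysis.
From mathcomp Require Import complex.
From mathcomp Require Import ring lra.
Import Order.TTheory GRing.Theory Num.Theory.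
Local Open Scope ring_scope.

Definition qn (R : realType) (V : lmodType R[i]) (ip : V -> V -> R[i]) (x : V) : R :=
  complex.Re (ip x x).
Arguments qn {R V} ip x.

Section Ip.
Context {R : realType} {V : lmodType R[i]} {ip : V -> V -> R[i]}.

Lemma ip0l (Hip : inner_product ip) z : ip 0 z = 0.
Proof.
case: Hip => L _ _ _; have := L 1 0 0 z; rewrite scale1r addr0 mul1r => h.
by apply: (@addrI _ (ip 0 z)); rewrite addr0 -h.
Qed.

Lemma ipDl (Hip : inner_product ip) x y z : ip (x + y) z = ip x z + ip y z.
Proof. by case: Hip => L _ _ _; have := L 1 x y z; rewrite scale1r mul1r. Qed.

Lemma ipZl (Hip : inner_product ip) a x z : ip (a *: x) z = a * ip x z.
Proof.
by case: (Hip) => L _ _ _; have := L a x 0 z; rewrite addr0 ip0l // addr0.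
Qed.

Lemma ipNl (Hip : inner_product ip) x z : ip (- x) z = - ip x z.
Proof. by rewrite -scaleN1r ipZl // mulN1r. Qed.

Lemma ipBl (Hip : inner_product ip) x y z : ip (x - y) z = ip x z - ip y z.
Proof. by rewrite ipDl // ipNl. Qed.

Lemma ipDr (Hip : inner_product ip) x y z : ip x (y + z) = ip x y + ip x z.
Proof.
case: (Hip) => _ S _ _.
by rewrite [LHS]S ipDl // rmorphD [ip x y]S [ip x z]S.
Qed.

Lemma ipZr (Hip : inner_product ip) a x y : ip x (a *: y) = conjc a * ip x y.
Proof.
case: (Hip) => _ S _ _.
by rewrite [LHS]S ipZl // rmorphM [ip x y]S.
Qed.

Lemma ipNr (Hip : inner_product ip) x z : ip x (- z) = - ip x z.
Proof. by rewrite -scaleN1r ipZr // rmorphN1 mulN1r. Qed.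

Lemma ipBr (Hip : inner_product ip) x y z : ip x (y - z) = ip x y - ip x z.
Proof. by rewrite ipDr // ipNr. Qed.

Lemma ip_ext (Hip : inner_product ip) u v : (forall x, ip x u = ip x v) -> u = v.
Proof.
move=> H; case: (Hip) => _ _ _ D.
apply/eqP; rewrite -subr_eq0; apply/eqP; apply: D.
by rewrite ipBr // H subrr.
Qed.

Lemma ReD (a b : R[i]) : complex.Re (a + b) = complex.Re a + complex.Re b.
Proof. by case: a; case: b. Qed.
Lemma ReN (a : R[i]) : complex.Re (- a) = - complex.Re a.
Proof. by case: a. Qed.
Lemma ReJ (a : R[i]) : complex.Re (conjc a) = complex.Re a.
Proof. by case: a. Qed.

Lemma Re_sym (Hip : inner_product ip) x y : complex.Re (ip y x) = complex.Re (ip x y).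
Proof. by case: (Hip) => _ S _ _; rewrite S ReJ. Qed.

Lemma ip_selfC (Hip : inner_product ip) x : ip x x = (qn ip x)%:C%C.
Proof.
case: (Hip) => _ _ P _; have [_] := P x; rewrite /qn.
by case: (ip x x) => a b /= ->.
Qed.

Lemma qn_ge0 (Hip : inner_product ip) x : 0 <= qn ip x.
Proof. by case: (Hip) => _ _ P _; have [] := P x. Qed.

Lemma qD (Hip : inner_product ip) u w :
  qn ip (u + w) = qn ip u + qn ip w + 2 * complex.Re (ip u w).
Proof.
rewrite /qn !ipDl // !ipDr // !ReD (Re_sym Hip w u); lra.
Qed.

Lemma qB (Hip : inner_product ip) u w :
  qn ip (u - w) = qn ip u + qn ip w - 2 * complex.Re (ip u w).
Proof.
rewrite /qn !ipBl // !ipBr // !ReD !ReN !ReD !ReN (Re_sym Hip w u); lra.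
Qed.

Lemma qZ (Hip : inner_product ip) a x :
  qn ip (a *: x) = (complex.Re a ^+ 2 + complex.Im a ^+ 2) * qn ip x.
Proof.
rewrite {1}/qn ipZl // ipZr // ip_selfC //.
case: a => r s /=; ring.
Qed.

End Ip.

Section Ops.
Context {R : realType} {V : lmodType R[i]} {ip : V -> V -> R[i]}.

Definition linop (T : V -> V) := forall (a : R[i]) (x y : V), T (a *: x + y) = a *: T x + T y.

Lemma bounded_qE (Hip : inner_product ip) T :
  bounded_op ip T <-> linop T /\ exists K, 0 <= K /\ forall x, qn ip (T x) <= K * qn ip x.
Proof.
split.
- case=> L [M HM]; split => //; exists (M ^+ 2); split; first exact: sqr_ge0.
  move=> x; have := HM x; rewrite /ipnorm.
  have h1 := sqr_sqrtr (qn_ge0 Hip (T x)); have h2 := sqr_sqrtr (qn_ge0 Hip x).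
  have h3 := sqrtr_ge0 (qn ip (T x)); have h4 := sqrtr_ge0 (qn ip x).
  rewrite /qn in h1 h2 h3 h4 *.
  move: h1 h2 h3 h4; set a := Num.sqrt _; set b := Num.sqrt _ => h1 h2 h3 h4 h.
  rewrite -h1 -h2; nra.
- case=> L [K [K0 HK]]; split => //; exists (Num.sqrt K) => x.
  rewrite /ipnorm -sqrtrM //; apply: ler_wsqrtr; exact: HK.
Qed.

Lemma qsum (Hip : inner_product ip) u w : qn ip (u + w) <= 2 * qn ip u + 2 * qn ip w.
Proof. have := qD Hip u w; have := qB Hip u w; have := qn_ge0 Hip (u - w); lra. Qed.

Lemma bounded_add (Hip : inner_product ip) X Y :
  bounded_op ip X -> bounded_op ip Y -> bounded_op ip (op_add X Y).
Proof.
move=> /(bounded_qE Hip) [LX [KX [KX0 HX]]] /(bounded_qE Hip) [LY [KY [KY0 HY]]].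
apply/(bounded_qE Hip); split.
  by move=> a x y; rewrite /op_add LX LY scalerDr addrACA.
exists (2 * KX + 2 * KY); split; first lra.
move=> x; rewrite /op_add; have := qsum Hip (X x) (Y x); have := HX x; have := HY x.
have := qn_ge0 Hip x; nra.
Qed.

Lemma bounded_scale (Hip : inner_product ip) a X :
  bounded_op ip X -> bounded_op ip (op_scale a X).
Proof.
move=> /(bounded_qE Hip) [LX [KX [KX0 HX]]].
apply/(bounded_qE Hip); split.
  by move=> b x y; rewrite /op_scale LX scalerDr !scalerA mulrC.
exists ((complex.Re a ^+ 2 + complex.Im a ^+ 2) * KX); split.
  by apply: mulr_ge0 => //; apply: addr_ge0; apply: sqr_ge0.
move=> x; rewrite /op_scale qZ // -mulrA; apply: ler_wpM2l => //.
by apply: addr_ge0; apply: sqr_ge0.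
Qed.

Lemma op_oppE (X : V -> V) : op_opp X = op_scale (-1) X.
Proof. by apply: funext => x; rewrite /op_opp /op_scale scaleN1r. Qed.

Lemma ReMr (t : R) (z : R[i]) : complex.Re ((t%:C)%C * z) = t * complex.Re z.
Proof. by case: z => a b /=; ring. Qed.

Lemma bounded_adj (Hip : inner_product ip) T S :
  bounded_op ip T -> is_adjoint ip T S -> bounded_op ip S.
Proof.
move=> /(bounded_qE Hip) [LT [K [K0 HK]]] HS.
apply/(bounded_qE Hip); split.
  move=> a x y; apply: (ip_ext Hip) => z.
  by rewrite -HS ipDr // ipZr // ipDr // ipZr // -!HS.
exists ((K + 1) ^+ 2); split; first exact: sqr_ge0.
move=> y.
have e1 : qn ip (S y) = complex.Re (ip (T (S y)) y) by rewrite /qn HS.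
have := qB Hip (T (S y)) ((K + 1)%:C%C *: y).
rewrite qZ // ipZr // conjc_real ReMr /= expr0n /= addr0.
have := qn_ge0 Hip (T (S y) - (K + 1)%:C%C *: y).
have := HK (S y); have := qn_ge0 Hip (S y); have := qn_ge0 Hip y.
rewrite -e1; nra.
Qed.

Lemma adj_uniq (Hip : inner_product ip) X Y : is_adjoint ip X Y -> adjoint ip X = Y.
Proof.
move=> H; rewrite /adjoint; case: pselect => [h|nh]; last by exfalso; apply: nh; exists Y.
case: (cid h) => Y' H' /=; apply: funext => y; apply: (ip_ext Hip) => x.
by rewrite -H' -H.
Qed.

Lemma adj_scale (Hip : inner_product ip) c X Y :
  is_adjoint ip X Y -> is_adjoint ip (op_scale c X) (op_scale (conjc c) Y).
Proof. by move=> H x y; rewrite /op_scale ipZl // ipZr // conjcK H. Qed.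

Lemma adj_add (Hip : inner_product ip) X Y X' Y' :
  is_adjoint ip X Y -> is_adjoint ip X' Y' -> is_adjoint ip (op_add X X') (op_add Y Y').
Proof. by move=> H H' x y; rewrite /op_add ipDl // ipDr // H H'. Qed.

Lemma adj_opp (Hip : inner_product ip) X Y :
  is_adjoint ip X Y -> is_adjoint ip (op_opp X) (op_opp Y).
Proof. by move=> H x y; rewrite /op_opp ipNl // ipNr // H. Qed.

Lemma adj_sym (Hip : inner_product ip) X Y : is_adjoint ip X Y -> is_adjoint ip Y X.
Proof.
case: (Hip) => _ S _ _ H x y.
by rewrite [LHS]S -H -S.
Qed.

End Ops.
Arguments bounded_add {R V ip} Hip {X Y}.
Arguments bounded_scale {R V ip} Hip a {X}.
Arguments bounded_adj {R V ip} Hip {T S}.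
Arguments adj_uniq {R V ip} Hip {X Y}.
Arguments adj_scale {R V ip} Hip c {X Y}.
Arguments adj_add {R V ip} Hip {X Y X' Y'}.
Arguments adj_opp {R V ip} Hip {X Y}.
Arguments adj_sym {R V ip} Hip {X Y}.

Section Main.
Context {R : realType} {V : lmodType R[i]} {ip : V -> V -> R[i]}.

Lemma half_C : (2^-1 : R[i]) = ((2^-1 : R)%:C)%C.
Proof. by rewrite fmorphV rmorph_nat. Qed.

Lemma Nscale (N : (V -> V) -> R) (HN : op_norm_on ip N) a S : bounded_op ip S ->
  N (op_scale a S) = Num.sqrt (complex.Re a ^+ 2 + complex.Im a ^+ 2) * N S.
Proof.
case: HN => _ _ Hs _ bS; have := Hs a S bS; rewrite normc_def.
by case: a => r s /= [-> _]; rewrite mulr0 subr0.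
Qed.

Lemma NscaleR (N : (V -> V) -> R) (HN : op_norm_on ip N) (r : R) S : bounded_op ip S ->
  N (op_scale (r%:C)%C S) = `|r| * N S.
Proof. by move=> bS; rewrite Nscale //= expr0n addr0 sqrtr_sqr. Qed.

Lemma NscaleI (N : (V -> V) -> R) (HN : op_norm_on ip N) (r : R) S : bounded_op ip S ->
  N (op_scale (Complex 0 r) S) = `|r| * N S.
Proof. by move=> bS; rewrite Nscale //= expr0n add0r sqrtr_sqr. Qed.

Lemma sup_le_img (f : R -> R) b : (forall t, f t <= b) -> sup [set f t | t in [set: R]] <= b.
Proof.
move=> H; apply: ge_sup; first by exists (f 0); exists 0.
by move=> _ [t _ <-].
Qed.

Lemma img_le_sup (f : R -> R) b t0 : (forall t, f t <= b) -> f t0 <= sup [set f t | t in [set: R]].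
Proof.
move=> H; apply: ub_le_sup; last by exists t0.
by exists b => _ [t _ <-].
Qed.

Lemma cs_ineq (c s a b : R) : c ^+ 2 + s ^+ 2 = 1 -> 0 <= a -> 0 <= b ->
  `|c| * a + `|s| * b <= Num.sqrt (a ^+ 2 + b ^+ 2).
Proof.
move=> h a0 b0.
have u0 : 0 <= `|c| by []. have v0 : 0 <= `|s| by [].
have huv : `|c| ^+ 2 + `|s| ^+ 2 = 1 by rewrite !real_normK ?num_real.
move: u0 v0 huv; set u := `|c|; set v := `|s| => u0 v0 huv.
have p0 : 0 <= u * a + v * b by apply: addr_ge0; apply: mulr_ge0.
rewrite -(ger0_norm p0) -sqrtr_sqr; apply: ler_wsqrtr.
rewrite -[X in _ <= X]mul1r -huv -subr_ge0.
have -> : (u ^+ 2 + v ^+ 2) * (a ^+ 2 + b ^+ 2) - (u * a + v * b) ^+ 2 = (v * a - u * b) ^+ 2 by ring.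
exact: sqr_ge0.
Qed.

Lemma abs_le1 (c s : R) : c ^+ 2 + s ^+ 2 = 1 -> `|c| <= 1.
Proof.
rewrite -real_normK ?num_real // => h.
have := normr_ge0 c; have := sqr_ge0 s; nra.
Qed.

End Main.

Theorem corollary2p9 (R : realType) (V : lmodType R[i]) (ip : V -> V -> R[i])
  (N : (V -> V) -> R) (T : V -> V) :
  hilbert_space ip ->
  op_norm_on ip N ->
  bounded_op ip T ->
  (exists S, is_adjoint ip T S) ->
  let Ts := adjoint ip T in
  2^-1 * Num.max (wN ip N (op_add T Ts)) (wN ip N (op_add T (op_opp Ts)))
    <= wN ip N T /\
  wN ip N T <= 2^-1 * Num.sqrt (wN ip N (op_add T Ts) ^+ 2
                                + wN ip N (op_add T (op_opp Ts)) ^+ 2).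
Proof.
move=> [Hip _] HN HT [S HS] Ts; rewrite /Ts (adj_uniq Hip HS).
have N0 : forall X, bounded_op ip X -> 0 <= N X by case: HN.
have Ntri : forall X Y, bounded_op ip X -> bounded_op ip Y -> N (op_add X Y) <= N X + N Y
  by case: HN.
set A := op_add T S; set B := op_add T (op_opp S).
have bS := bounded_adj Hip HT HS.
have bA : bounded_op ip A := bounded_add Hip HT bS.
have bB : bounded_op ip B by rewrite /B; apply: (bounded_add Hip HT); rewrite op_oppE; exact: bounded_scale.
have adjA : is_adjoint ip A A.
  have := adj_add Hip HS (adj_sym Hip HS).
  by have -> : op_add S T = A by apply: funext => x; rewrite /A /op_add addrC.
have adjB : is_adjoint ip B (op_opp B).
  have := adj_add Hip HS (adj_opp Hip (adj_sym Hip HS)).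
  have -> // : op_add S (op_opp T) = op_opp B.
  by apply: funext => x; rewrite /B /op_add /op_opp opprD opprK addrC.
have ReE : forall X Y t, is_adjoint ip X Y -> op_Re ip (op_scale (expi t) X) =
    op_scale 2^-1 (op_add (op_scale (expi t) X) (op_scale (conjc (expi t)) Y)).
  by move=> X Y t H; rewrite /op_Re (adj_uniq Hip (adj_scale Hip _ H)).
have fA : forall t, N (op_Re ip (op_scale (expi t) A)) = `|cos t| * N A.
  move=> t; rewrite (ReE _ _ _ adjA).
  have -> : op_scale 2^-1 (op_add (op_scale (expi t) A) (op_scale (conjc (expi t)) A))
      = op_scale ((cos t)%:C)%C A.
    apply: funext => x; rewrite /op_scale /op_add -scalerDl scalerA; congr (_ *: _).
    by rewrite half_C /expi; apply/eqP; rewrite eq_complex /=; apply/andP; split; apply/eqP; lra.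
  by rewrite (NscaleR _ HN).
have fB : forall t, N (op_Re ip (op_scale (expi t) B)) = `|sin t| * N B.
  move=> t; rewrite (ReE _ _ _ adjB).
  have -> : op_scale 2^-1 (op_add (op_scale (expi t) B) (op_scale (conjc (expi t)) (op_opp B)))
      = op_scale (Complex 0 (sin t)) B.
    apply: funext => x; rewrite /op_scale /op_add /op_opp scalerN -scalerBl scalerA; congr (_ *: _).
    by rewrite half_C /expi; apply/eqP; rewrite eq_complex /=; apply/andP; split; apply/eqP; lra.
  by rewrite (NscaleI _ HN).
have bT2 : forall t, bounded_op ip (op_add (op_scale ((cos t)%:C)%C A) (op_scale (Complex 0 (sin t)) B)).
  by move=> t; apply: (bounded_add Hip); apply: (bounded_scale Hip).
have fT : forall t, N (op_Re ip (op_scale (expi t) T)) =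
    2^-1 * N (op_add (op_scale ((cos t)%:C)%C A) (op_scale (Complex 0 (sin t)) B)).
  move=> t; rewrite (ReE _ _ _ HS).
  have -> : op_add (op_scale (expi t) T) (op_scale (conjc (expi t)) S) =
      op_add (op_scale ((cos t)%:C)%C A) (op_scale (Complex 0 (sin t)) B).
    apply: funext => x; rewrite /op_scale /op_add /A /B /op_add /op_opp !scalerDr scalerN.
    have -> : expi t = ((cos t)%:C)%C + Complex 0 (sin t).
      by rewrite /expi; apply/eqP; rewrite eq_complex /=; apply/andP; split; apply/eqP; lra.
    have -> : conjc (((cos t)%:C)%C + Complex 0 (sin t)) = ((cos t)%:C)%C - Complex 0 (sin t).
      by apply/eqP; rewrite eq_complex /=; apply/andP; split; apply/eqP; lra.
    by rewrite scalerDl scalerBl addrACA.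
  by rewrite half_C (NscaleR _ HN) // ger0_norm //; lra.
have NA0 := N0 _ bA; have NB0 := N0 _ bB.
have wA : wN ip N A = N A.
  apply/le_anti/andP; split.
    apply: sup_le_img => t; rewrite fA; have := cos2Dsin2 t.
    move=> /abs_le1 h; rewrite -[X in _ <= X]mul1r; exact: ler_wpM2r.
  have := @img_le_sup _ (fun t => N (op_Re ip (op_scale (expi t) A))) (N A) 0.
  rewrite /= fA cos0 normr1 mul1r; apply => t; rewrite fA.
  have h := abs_le1 _ _ (cos2Dsin2 t); rewrite -[X in _ <= X]mul1r; exact: ler_wpM2r.
have wB : wN ip N B = N B.
  have sb : forall t : R, `|sin t| <= 1.
    move=> t.
    by move: (cos2Dsin2 t); rewrite addrC => /abs_le1.
  apply/le_anti/andP; split.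
    apply: sup_le_img => t; rewrite fB; rewrite -[X in _ <= X]mul1r; exact: ler_wpM2r.
  have := @img_le_sup _ (fun t => N (op_Re ip (op_scale (expi t) B))) (N B) (pi / 2).
  rewrite /= fB sin_pihalf normr1 mul1r; apply => t; rewrite fB.
  rewrite -[X in _ <= X]mul1r; exact: ler_wpM2r.
rewrite wA wB.
have Hub : forall t, N (op_Re ip (op_scale (expi t) T)) <= 2^-1 * Num.sqrt (N A ^+ 2 + N B ^+ 2).
  move=> t; rewrite fT; apply: ler_wpM2l; first lra.
  apply: le_trans (Ntri _ _ _ _) _; try by apply: (bounded_scale Hip).
  rewrite (NscaleR _ HN) // (NscaleI _ HN) //; exact: cs_ineq (cos2Dsin2 t) NA0 NB0.
split; last exact: sup_le_img.
rewrite maxr_pMr; last lra.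
rewrite ge_max; apply/andP; split.
  have := @img_le_sup _ (fun t => N (op_Re ip (op_scale (expi t) T))) _ 0 Hub.
  rewrite /= fT cos0 sin0.
  have -> // : op_add (op_scale ((1:R)%:C)%C A) (op_scale (Complex 0 0) B) = A.
  by apply: funext => x; rewrite /op_add /op_scale rmorph1 scale1r scale0r addr0.
have := @img_le_sup _ (fun t => N (op_Re ip (op_scale (expi t) T))) _ (pi / 2) Hub.
rewrite /= fT cos_pihalf sin_pihalf.
have -> // : op_add (op_scale ((0:R)%:C)%C A) (op_scale (Complex 0 1) B) = op_scale (Complex 0 1) B.
  by apply: funext => x; rewrite /op_add /op_scale rmorph0 scale0r add0r.
by rewrite (NscaleI _ HN) // normr1 mul1r.
Qed.
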